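(* Let $d\ge2$ and let $\mathcal{H}$ be a $d$-uniform simple hypergraph such that any two distinct edges $S,S'$ with $S\cap S'\neq\emptyset$ satisfy $|S\cap S'|=d-1$. Let $x$ be a simplicial vertex of $\mathcal{H}$, $S=\{x,x_2,\dots,x_d\}$ an edge containing $x$, and $N(S)=\{z_1,\dots,z_t\}$ with $z_1,\dots,z_t$ pairwise distinct. Let $S_1,\dots,S_t$ be distinct edges of $\mathcal{H}$ with $S_\ell\setminus S=\{z_\ell\}$ and $x\notin S_\ell$ for all $1\le\ell\le t$, and let $\mathcal{H}_2$ be the induced subhypergraph of $\mathcal{H}$ on $V(\mathcal{H})\setminus\{x,x_2,\dots,x_d,z_1,\dots,z_t\}$. If $\mathcal{S}'$ is a self disjoint set in $\mathcal{H}_2$ of type $(i-1-t,\,j-d-t)$, then $\mathcal{S}=\mathcal{S}'\cup\{S,S_1,\dots,S_t\}$ is a self disjoint set in $\mathcal{H}$ of type $(i,j)$.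
   Context: A simple hypergraph $\mathcal{H}$ is a set $\mathcal{E}(\mathcal{H})$ of subsets (edges) of a finite vertex set $V(\mathcal{H})$, each of cardinality at least $2$, none contained in another; $d$-uniform means all edges have cardinality $d$. For $W\subseteq V(\mathcal{H})$, the induced subhypergraph $\mathcal{H}_W$ has vertex set $W$ and edges the edges of $\mathcal{H}$ contained in $W$. For an edge $S$, $N(S)=\bigcup_{E\in\mathcal{E}(\mathcal{H}),\,E\cap S\neq\emptyset}(E\setminus S)$. For a vertex $x$, $N[x]=\{x\}\cup\{y:\{x,y\}\subseteq E\text{ for some edge }E\}$; $x$ is simplicial if every $d$-subset of $N[x]$ is an edge. For a family $\mathcal{S}=\{T_1,\dots,T_i\}$ of distinct edges, its type is $(i,j)$ with $j=|\bigcup_\ell T_\ell|$. $\mathcal{S}$ is an induced matching if the $T_\ell$ are pairwise disjoint and no edge outside $\mathcal{S}$ is contained in $\bigcup_\ell T_\ell$; a self disjoint set if (i) for all $k$, $T_k\nsubseteq\bigcup_{\ell\neq k}T_\ell$, and (ii) there is an induced matching $\mathcal{S}_0\subseteq\mathcal{S}$ such that for every $T_\ell\in\mathcal{S}\setminus\mathcal{S}_0$ there is $T'\in\mathcal{S}_0$ with $|T_\ell\setminus T'|=1$ (all notions relative to the ambient hypergraph, $\mathcal{H}_2$ or $\mathcal{H}$). *)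

(* Defs.v *)
From mathcomp Require Import all_boot.
Set Implicit Arguments. Unset Strict Implicit. Unset Printing Implicit Defensive.

Section Hyper.
Variable T : finType.

Definition is_hypergraph (V : {set T}) (E : {set {set T}}) : Prop :=
  forall e, e \in E -> e \subset V.

Definition simple_hypergraph (V : {set T}) (E : {set {set T}}) : Prop :=
  is_hypergraph V E /\
  (forall e, e \in E -> 2 <= #|e|) /\
  (forall e e', e \in E -> e' \in E -> e \subset e' -> e = e').

Definition uniform (d : nat) (E : {set {set T}}) : Prop :=
  forall e, e \in E -> #|e| = d.

(* induced subhypergraph on W: vertex set W, edges of E contained in W *)
Definition induced_edges (E : {set {set T}}) (W : {set T}) : {set {set T}} :=
  [set e in E | e \subset W].

Definition nbhd_edge (E : {set {set T}}) (S : {set T}) : {set T} :=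
  \bigcup_(e in E | ~~ [disjoint e & S]) (e :\: S).

Definition closed_nbhd (E : {set {set T}}) (x : T) : {set T} :=
  x |: [set y | [exists e in E, (x \in e) && (y \in e)]].

Definition simplicial (d : nat) (E : {set {set T}}) (x : T) : Prop :=
  forall A : {set T}, A \subset closed_nbhd E x -> #|A| = d -> A \in E.

Definition has_type (F : {set {set T}}) (i j : nat) : Prop :=
  #|F| = i /\ #|cover F| = j.

Definition induced_matching (E : {set {set T}}) (F : {set {set T}}) : Prop :=
  F \subset E /\ trivIset F /\
  (forall e, e \in E -> e \subset cover F -> e \in F).

Definition self_disjoint (E : {set {set T}}) (F : {set {set T}}) : Prop :=
  F \subset E /\
  (forall Tk, Tk \in F -> ~~ (Tk \subset cover (F :\ Tk))) /\
  (exists F0 : {set {set T}}, F0 \subset F /\ induced_matching E F0 /\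
     forall Tl, Tl \in F :\: F0 -> exists2 T', T' \in F0 & #|Tl :\: T'| = 1).

End Hyper.

(* Main.v *)
Require Import Defs.
From mathcomp Require Import all_boot.
From mathcomp Require Import zify.

Lemma card_disjU (T : finType) (A B : {set T}) :
  (forall y, y \in A -> y \notin B) -> #|A :|: B| = #|A| + #|B|.
Proof.
move=> h; rewrite -cardsUI; have ->: A :&: B = set0.
  apply/setP=> y; rewrite !inE; case: (boolP (y \in A)) => //= /h /negbTE //.
by rewrite cards0 addn0.
Qed.

Theorem lemma3p4 (T : finType) (V : {set T}) (E : {set {set T}}) (d : nat)
  (hd : 2 <= d)
  (hsimple : simple_hypergraph V E) (hunif : uniform d E)
  (hint : forall S1 S2, S1 \in E -> S2 \in E -> S1 != S2 ->
            ~~ [disjoint S1 & S2] -> #|S1 :&: S2| = d.-1)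
  (x : T) (hxV : x \in V) (hxs : simplicial d E x)
  (S : {set T}) (hS : S \in E) (hxS : x \in S)
  (t : nat) (z : 'I_t -> T) (hzinj : injective z)
  (hNS : nbhd_edge E S = [set z l | l : 'I_t])
  (Sl : 'I_t -> {set T}) (hSlinj : injective Sl)
  (hSlE : forall l, Sl l \in E)
  (hSlz : forall l, Sl l :\: S = [set z l])
  (hxSl : forall l, x \notin Sl l)
  (S' : {set {set T}}) (i j : nat)
  (hS' : self_disjoint (induced_edges E (V :\: (S :|: nbhd_edge E S))) S')
  (htype : has_type S' (i - 1 - t) (j - d - t))
  (hi : 1 + t <= i) (hj : d + t <= j) :
  self_disjoint E (S' :|: (S |: [set Sl l | l : 'I_t])) /\
  has_type (S' :|: (S |: [set Sl l | l : 'I_t])) i j.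
Proof.
rewrite hNS in hS'.
set Z := [set z l | l : 'I_t] in hS' hNS *.
set W := V :\: (S :|: Z) in hS'.
set A := [set Sl l | l : 'I_t].
have hS'E : forall e, e \in S' -> e \in E /\ e \subset W.
  move: hS' => [hsub _] e he; have := subsetP hsub e he.
  by rewrite /induced_edges inE => /andP[].
have hWn : forall y, y \in W -> (y \notin S) && (y \notin Z).
  by move=> y; rewrite /W !inE negb_or => /andP[].
have hcovW : forall y, y \in cover S' -> y \in W.
  by move=> y /bigcupP[e he hy]; exact: (subsetP (hS'E e he).2 y hy).
have hzSl : forall l, z l \in Sl l :\: S by move=> l; rewrite hSlz set11.
have hzS : forall l, z l \notin S by move=> l; have := hzSl l; rewrite inE => /andP[].
have hzSl' : forall l, z l \in Sl l by move=> l; have := hzSl l; rewrite inE => /andP[].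
have hzZ : forall l, z l \in Z by move=> l; apply: imset_f.
have hSlsub : forall l y, y \in Sl l -> (y \in S) || (y == z l).
  move=> l y hy; case: (boolP (y \in S)) => //= hyS.
  have: y \in Sl l :\: S by rewrite inE hyS hy.
  by rewrite hSlz inE.
have hzSm : forall l m, z l \in Sl m -> l = m.
  by move=> l m /hSlsub; rewrite (negbTE (hzS l)) /= => /eqP /hzinj.
have hcovA : cover (S |: A) = S :|: Z.
  apply/setP=> y; apply/bigcupP/setUP.
  - move=> [e /setU1P[->|/imsetP[l _ ->]] hy]; first by left.
    case/orP: (hSlsub l y hy) => [|/eqP ->]; first by left.
    by right; apply: imset_f.
  - case=> [hy | /imsetP[l _ ->]]; first by exists S; rewrite ?setU11.
    by exists (Sl l); rewrite ?setU1r ?imset_f.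
have hcovF : cover (S' :|: (S |: A)) = cover S' :|: (S :|: Z).
  by rewrite /cover bigcup_setU -/(cover (S |: A)) hcovA.
have hSnotS' : S \notin S'.
  apply/negP=> /hS'E [_ /subsetP h]; have := hWn x (h x hxS); by rewrite hxS.
have hSlnotS' : forall l, Sl l \notin S'.
  move=> l; apply/negP=> /hS'E [_ /subsetP h]; have := hWn _ (h _ (hzSl' l)).
  by rewrite hzZ andbF.
have hSnotA : S \notin A.
  apply/imsetP => [[l _ hl]]; move: (hxSl l); by rewrite -hl hxS.
move: htype => [hc1 hc2].
split; last first.
  split.
    rewrite card_disjU; last first.
      move=> e he; rewrite !inE negb_or; apply/andP; split.
        by apply/negP=> /eqP he'; rewrite -he' he in hSnotS'.
      by apply/negP=> /imsetP[l _ hl]; move: (hSlnotS' l); rewrite -hl he.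
    rewrite cardsU1 hSnotA card_imset // card_ord hc1; lia.
  rewrite hcovF card_disjU; last first.
    move=> y /hcovW /hWn /andP[h1 h2]; by rewrite inE negb_or h1 h2.
  rewrite card_disjU; last by move=> y hy; apply/negP=> /imsetP[l _ hl]; move: (hzS l); rewrite -hl hy.
  rewrite card_imset // card_ord hc2 (hunif S hS); lia.
move: hS' => [hsub [hsd [F0 [hF0sub [[hF0E [hF0triv hF0ind]] hF0rest]]]]].
have hF0S' : forall e, e \in F0 -> e \in S' by move=> e he; exact: (subsetP hF0sub e he).
split.
  apply/subsetP=> e /setUP[/hS'E[]//| /setU1P[->//|/imsetP[l _ ->]//]].
split.
  move=> Tk /setUP[hTk | /setU1P[-> | /imsetP[l _ ->]]].
  - apply/negP => hsubc; move/negP: (hsd Tk hTk); apply; apply/subsetP=> y hy.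
    have hyc := subsetP hsubc y hy.
    have /andP[hyS hyZ] := hWn y (subsetP (hS'E Tk hTk).2 y hy).
    move/bigcupP: hyc => [e]; rewrite !inE => /andP[hne /orP[he | /orP[/eqP he | he]]] hye.
    + by apply/bigcupP; exists e; rewrite ?inE ?hne ?he.
    + by rewrite -he hye in hyS.
    + move/imsetP: he => [l _ hl]; rewrite hl in hye.
      case/orP: (hSlsub l y hye) => [h|/eqP h]; first by rewrite h in hyS.
      by rewrite h hzZ in hyZ.
  - apply/negP=> /subsetP /(_ x hxS) /bigcupP[e]; rewrite !inE.
    move=> /andP[hne /orP[he|/orP[/eqP he|he]]] hxe.
    + by have := hWn x (subsetP (hS'E e he).2 x hxe); rewrite hxS.
    + by rewrite he eqxx in hne.
    + by move/imsetP: he => [l _ hl]; move: (hxSl l); rewrite -hl hxe.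
  - apply/negP=> /subsetP /(_ (z l) (hzSl' l)) /bigcupP[e]; rewrite !inE.
    move=> /andP[hne /orP[he|/orP[/eqP he|he]]] hxe.
    + by have := hWn _ (subsetP (hS'E e he).2 _ hxe); rewrite hzZ andbF.
    + by move: (hzS l); rewrite -he hxe.
    + move/imsetP: he => [m _ hm]; rewrite hm in hxe hne.
      by rewrite (hzSm _ _ hxe) eqxx in hne.
exists (S |: F0).
split.
  apply/subsetP => e /setU1P[->|he]; first by rewrite !inE eqxx !orbT.
  by rewrite !inE (hF0S' e he).
split.
  split.
    apply/subsetP => e /setU1P[->//|he]; exact: (hS'E e (hF0S' e he)).1.
  split.
    apply/trivIsetP => B1 B2 /setU1P[->|hB1] /setU1P[->|hB2] hB12.
    - by rewrite eqxx in hB12.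
    - rewrite disjoint_subset; apply/subsetP => y hy; rewrite inE.
      apply/negP=> hy2; have := hWn y (subsetP (hS'E B2 (hF0S' _ hB2)).2 y hy2).
      by rewrite hy.
    - rewrite disjoint_sym disjoint_subset; apply/subsetP => y hy; rewrite inE.
      apply/negP=> hy2; have := hWn y (subsetP (hS'E B1 (hF0S' _ hB1)).2 y hy2).
      by rewrite hy.
    - by move/trivIsetP: hF0triv; apply.
  move=> e he hsube.
  have hcov : forall y, y \in e -> y \notin S -> y \in cover F0.
    move=> y hy hyS; move/bigcupP: (subsetP hsube y hy) => [B].
    move=> /setU1P[->|hB] hyB; first by rewrite hyB in hyS.
    by apply/bigcupP; exists B.
  have hcovF0W : forall y, y \in cover F0 -> y \in W.
    move=> y /bigcupP[B hB hy]; apply: hcovW; apply/bigcupP; exists B => //.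
    exact: hF0S'.
  case: (boolP [disjoint e & S]) => hdis.
  - apply/setU1P; right; apply: hF0ind.
      rewrite /induced_edges inE he /=; apply/subsetP => y hy.
      apply: hcovF0W; apply: hcov => //.
      by rewrite (disjointFr hdis hy).
    apply/subsetP => y hy; apply: hcov => //; by rewrite (disjointFr hdis hy).
  - have heS : e \subset S.
      apply/subsetP => y hy; apply/negPn/negP => hyS.
      have hyN : y \in nbhd_edge E S.
        apply/bigcupP; exists e; first by rewrite he hdis.
        by rewrite inE hyS hy.
      rewrite hNS in hyN.
      have := hWn y (hcovF0W y (hcov y hy hyS)); by rewrite hyN andbF.
    by rewrite (hsimple.2.2 e S he hS heS) setU11.
move=> Tl; rewrite !inE negb_or => /andP[/andP[hn1 hn2] /orP[hTl | /orP[/eqP hTl | hA]]].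
- have: Tl \in S' :\: F0 by rewrite inE hTl hn2.
  move/hF0rest => [T' hT' hc]; exists T' => //; by rewrite setU1r.
- by rewrite hTl eqxx in hn1.
- move/imsetP: hA => [l _ ->]; exists S; first by rewrite setU11.
  by rewrite hSlz cards1.
Qed.
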